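(* There are no proper triharmonic curves with constant curvature immersed in the product space $\mathbb{H}^2(4a)\times\mathbb{R}$ ($a<0$).
   Context: $\mathbb{H}^2(4a)\times\mathbb{R}$ is the Riemannian product of the hyperbolic plane of constant curvature $4a<0$ with the real line; equivalently the BCV space $M(a,0)$, i.e. $\{(x,y,z):1+a(x^2+y^2)>0\}$ with metric $\frac{dx^2+dy^2}{[1+a(x^2+y^2)]^2}+dz^2$. An arc-length parametrized curve $\gamma$ with $T=\gamma'$ is triharmonic if $\nabla_T^5T+R(\nabla_T^3T,T)T-R(\nabla_T^2T,\nabla_TT)T=0$, where $\nabla$ is the Levi-Civita connection and $R(X,Y)=\nabla_X\nabla_Y-\nabla_Y\nabla_X-\nabla_{[X,Y]}$; it is proper if it is not a geodesic. The curvature is $\kappa=\lVert\nabla_TT\rVert$. *)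

(* Defs.v *)
(* The BCV space M(a,0) = H^2(4a) x R is modelled in its global coordinate
   chart {(x,y,z) : 1 + a(x^2+y^2) > 0} of R^3, with the metric
   (dx^2+dy^2)/[1+a(x^2+y^2)]^2 + dz^2.  Points and tangent vectors are
   functions nat -> R, with components 0,1,2 = x,y,z (other components are
   irrelevant). *)
From Stdlib Require Import Reals.
From Coquelicot Require Import Coquelicot.
Open Scope R_scope.

Definition vec := nat -> R.

Definition sum3 (f : nat -> R) : R := f 0%nat + f 1%nat + f 2%nat.

Definition in_M (a : R) (p : vec) : Prop := 1 + a * (p 0%nat ^ 2 + p 1%nat ^ 2) > 0.

Definition gmet (a : R) (i j : nat) (p : vec) : R :=
  if Nat.eqb i j then
    (if Nat.ltb i 2 then 1 / (1 + a * (p 0%nat ^ 2 + p 1%nat ^ 2)) ^ 2 else 1)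
  else 0.

Definition ginv (a : R) (i j : nat) (p : vec) : R :=
  if Nat.eqb i j then / gmet a i i p else 0.

Definition upd (p : vec) (i : nat) (s : R) : vec :=
  fun j => if Nat.eqb j i then s else p j.

Definition partial (i : nat) (f : vec -> R) (p : vec) : R :=
  Derive (fun s => f (upd p i s)) (p i).

Definition Gamma (a : R) (k i j : nat) (p : vec) : R :=
  / 2 * sum3 (fun l => ginv a k l p *
     (partial i (gmet a j l) p + partial j (gmet a i l) p - partial l (gmet a i j) p)).

(* components R^l_{ijk} with R(d_i,d_j)d_k = R^l_{ijk} d_l, for the convention
   R(X,Y) = nabla_X nabla_Y - nabla_Y nabla_X - nabla_[X,Y] *)
Definition Riem_comp (a : R) (l i j k : nat) (p : vec) : R :=
  partial i (Gamma a l j k) p - partial j (Gamma a l i k) p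
  + sum3 (fun m => Gamma a l i m p * Gamma a m j k p - Gamma a l j m p * Gamma a m i k p).

Definition Riem (a : R) (p : vec) (X Y Z : vec) : vec :=
  fun l => sum3 (fun i => sum3 (fun j => sum3 (fun k =>
     Riem_comp a l i j k p * X i * Y j * Z k))).

Definition gdot (a : R) (p : vec) (X Y : vec) : R :=
  sum3 (fun i => sum3 (fun j => gmet a i j p * X i * Y j)).

Definition vel (gamma : R -> vec) : R -> vec :=
  fun t k => Derive (fun s => gamma s k) t.

Definition covD (a : R) (gamma : R -> vec) (V : R -> vec) : R -> vec :=
  fun t k => Derive (fun s => V s k) t
    + sum3 (fun i => sum3 (fun j => Gamma a k i j (gamma t) * vel gamma t i * V t j)).

Fixpoint covDn (a : R) (gamma : R -> vec) (n : nat) (V : R -> vec) : R -> vec :=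
  match n with
  | O => V
  | S m => covD a gamma (covDn a gamma m V)
  end.

Definition nablaT (a : R) (gamma : R -> vec) (n : nat) : R -> vec :=
  covDn a gamma n (vel gamma).

Definition curvature (a : R) (gamma : R -> vec) (t : R) : R :=
  sqrt (gdot a (gamma t) (nablaT a gamma 1 t) (nablaT a gamma 1 t)).

Definition smooth_curve_in_M (a alpha beta : R) (gamma : R -> vec) : Prop :=
  (forall t, alpha < t < beta -> in_M a (gamma t)) /\
  (forall k n t, (k < 3)%nat -> alpha < t < beta ->
     ex_derive_n (fun s => gamma s k) n t).

Definition arc_length (a alpha beta : R) (gamma : R -> vec) : Prop :=
  forall t, alpha < t < beta -> gdot a (gamma t) (vel gamma t) (vel gamma t) = 1.

Definition triharmonic (a alpha beta : R) (gamma : R -> vec) : Prop :=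
  forall t, alpha < t < beta -> forall l, (l < 3)%nat ->
    nablaT a gamma 5 t l
    + Riem a (gamma t) (nablaT a gamma 3 t) (vel gamma t) (vel gamma t) l
    - Riem a (gamma t) (nablaT a gamma 2 t) (nablaT a gamma 1 t) (vel gamma t) l = 0.

Definition geodesic (a alpha beta : R) (gamma : R -> vec) : Prop :=
  forall t, alpha < t < beta -> forall k, (k < 3)%nat -> nablaT a gamma 1 t k = 0.

Definition constant_curvature (a alpha beta : R) (gamma : R -> vec) : Prop :=
  exists c, forall t, alpha < t < beta -> curvature a gamma t = c.

(* Main.v *)
Require Import Defs.
From Stdlib Require Import Reals Lra Lia.
From Coquelicot Require Import Coquelicot.
Open Scope R_scope.

Definition DD (a x y : R) : R := 1 + a * (x ^ 2 + y ^ 2).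

Lemma dgx : forall a x y, DD a x y <> 0 ->
  Derive (fun s => 1 / (1 + a * (s ^ 2 + y ^ 2)) ^ 2) x = -4 * a * x / (DD a x y) ^ 3.
Proof.
  intros a x y H. unfold DD in *. apply is_derive_unique.
  auto_derive. { simpl. rewrite Rmult_1_r. intro H'. apply H. nra. }
  field. auto.
Qed.

Lemma dgy : forall a x y, DD a x y <> 0 ->
  Derive (fun s => 1 / (1 + a * (x ^ 2 + s ^ 2)) ^ 2) y = -4 * a * y / (DD a x y) ^ 3.
Proof.
  intros a x y H. unfold DD in *. apply is_derive_unique.
  auto_derive. { simpl. rewrite Rmult_1_r. intro H'. apply H. nra. }
  field. auto.
Qed.

Definition dg (a : R) (i j l : nat) (p : vec) : R :=
  if andb (Nat.eqb j l) (Nat.ltb j 2) then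
    match i with
    | 0%nat => -4 * a * p 0%nat / (DD a (p 0%nat) (p 1%nat)) ^ 3
    | 1%nat => -4 * a * p 1%nat / (DD a (p 0%nat) (p 1%nat)) ^ 3
    | _ => 0 end
  else 0.

Lemma partial_gmet : forall a p i j l, DD a (p 0%nat) (p 1%nat) <> 0 ->
  (i < 3)%nat -> (j < 3)%nat -> (l < 3)%nat ->
  partial i (gmet a j l) p = dg a i j l p.
Proof.
  intros a p i j l H Hi Hj Hl. unfold partial, gmet, dg, upd.
  destruct i as [|[|[|i]]]; try lia; destruct j as [|[|[|j]]]; try lia;
  destruct l as [|[|[|l]]]; try lia; simpl; try apply Derive_const.
  all: first [ apply dgx; exact H | apply dgy; exact H ].
Qed.

Definition al (k i j : nat) : R :=
  match k, i, j with
  | O, O, O => 1 | O, S O, S O => -1 | S O, O, S O => 1 | S O, S O, O => 1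
  | _, _, _ => 0 end.
Definition be (k i j : nat) : R :=
  match k, i, j with
  | O, O, S O => 1 | O, S O, O => 1 | S O, O, O => -1 | S O, S O, S O => 1
  | _, _, _ => 0 end.

Definition GE (a : R) (k i j : nat) (x y : R) : R :=
  -2 * a * (al k i j * x + be k i j * y) / DD a x y.

Lemma Gamma_E : forall a p k i j, DD a (p 0%nat) (p 1%nat) <> 0 ->
  (k < 3)%nat -> (i < 3)%nat -> (j < 3)%nat ->
  Gamma a k i j p = GE a k i j (p 0%nat) (p 1%nat).
Proof.
  intros a p k i j H Hk Hi Hj. unfold Gamma, sum3.
  rewrite !partial_gmet by (auto; lia).
  unfold GE, ginv, gmet, dg.
  destruct k as [|[|[|k]]]; try lia; destruct i as [|[|[|i]]]; try lia;
  destruct j as [|[|[|j]]]; try lia; simpl; unfold DD in *; field; auto.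
Qed.

Lemma loc_pos : forall (f : R -> R) x, continuous f x -> 0 < f x ->
  locally x (fun y => 0 < f y).
Proof.
  intros f x Hc Hp. apply Hc. apply (open_gt 0). exact Hp.
Qed.

Definition dGE (a : R) (l j k i : nat) (x y : R) : R :=
  match i with
  | O => -2 * a * (al l j k * DD a x y - (al l j k * x + be l j k * y) * (2 * a * x)) / (DD a x y) ^ 2
  | S O => -2 * a * (be l j k * DD a x y - (al l j k * x + be l j k * y) * (2 * a * y)) / (DD a x y) ^ 2
  | _ => 0 end.

Lemma partial_Gamma : forall a p l j k i, 0 < DD a (p 0%nat) (p 1%nat) ->
  (l < 3)%nat -> (j < 3)%nat -> (k < 3)%nat -> (i < 3)%nat ->
  partial i (Gamma a l j k) p = dGE a l j k i (p 0%nat) (p 1%nat).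
Proof.
  intros a p l j k i H Hl Hj Hk Hi. unfold partial.
  destruct i as [|[|[|i]]]; try lia.
  - rewrite (Derive_ext_loc _ (fun s => GE a l j k s (p 1%nat))).
    + apply is_derive_unique. unfold GE, dGE, DD in *. auto_derive.
      { simpl in H |- *. lra. }
      simpl in H |- *. field. lra.
    + assert (Hc : continuous (fun s => DD a s (p 1%nat)) (p 0%nat)).
      { apply (ex_derive_continuous (K:=R_AbsRing) (V:=R_NormedModule)). unfold DD. auto_derive. auto. }
      generalize (loc_pos _ _ Hc H). apply filter_imp. intros s Hs.
      rewrite Gamma_E by (unfold upd; simpl; try lra; auto). unfold upd; simpl; reflexivity.
  - rewrite (Derive_ext_loc _ (fun s => GE a l j k (p 0%nat) s)).
    + apply is_derive_unique. unfold GE, dGE, DD in *. auto_derive.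
      { simpl in H |- *. lra. }
      simpl in H |- *. field. lra.
    + assert (Hc : continuous (fun s => DD a (p 0%nat) s) (p 1%nat)).
      { apply (ex_derive_continuous (K:=R_AbsRing) (V:=R_NormedModule)). unfold DD. auto_derive. auto. }
      generalize (loc_pos _ _ Hc H). apply filter_imp. intros s Hs.
      rewrite Gamma_E by (unfold upd; simpl; try lra; auto). unfold upd; simpl; reflexivity.
  - rewrite (Derive_ext _ (fun s => GE a l j k (p 0%nat) (p 1%nat))).
    + apply Derive_const.
    + intros s. rewrite Gamma_E by (unfold upd; simpl; try lra; auto). unfold upd; simpl; reflexivity.
Qed.

Definition dlt (m n : nat) : R := if Nat.eqb m n then 1 else 0.

Definition RC (a : R) (l i j k : nat) (x y : R) : R :=
  if andb (andb (Nat.ltb l 2) (Nat.ltb i 2)) (andb (Nat.ltb j 2) (Nat.ltb k 2)) then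
    4 * a / (DD a x y) ^ 2 * (dlt j k * dlt i l - dlt i k * dlt j l)
  else 0.

Lemma Riem_comp_E : forall a p l i j k, 0 < DD a (p 0%nat) (p 1%nat) ->
  (l < 3)%nat -> (i < 3)%nat -> (j < 3)%nat -> (k < 3)%nat ->
  Riem_comp a l i j k p = RC a l i j k (p 0%nat) (p 1%nat).
Proof.
  intros a p l i j k H Hl Hi Hj Hk. unfold Riem_comp, sum3.
  rewrite !partial_Gamma by (auto; lia).
  rewrite !Gamma_E by (auto; try lra; lia).
  unfold RC, dGE, GE, dlt.
  destruct l as [|[|[|l]]]; try lia; destruct i as [|[|[|i]]]; try lia;
  destruct j as [|[|[|j]]]; try lia; destruct k as [|[|[|k]]]; try lia;
  simpl; unfold DD in *; field; lra.
Qed.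

Definition HH (a : R) (p X Y : vec) : R :=
  (X 0%nat * Y 0%nat + X 1%nat * Y 1%nat) / (DD a (p 0%nat) (p 1%nat)) ^ 2.



Lemma gdot_E : forall a p X Y,
  gdot a p X Y = HH a p X Y + X 2%nat * Y 2%nat.
Proof. intros. unfold gdot, sum3, gmet, HH, DD. simpl. unfold Rdiv. ring. Qed.

Lemma Riem_E : forall a p X Y Z l, 0 < DD a (p 0%nat) (p 1%nat) -> (l < 3)%nat ->
  Riem a p X Y Z l =
  if Nat.ltb l 2 then 4 * a * (HH a p Y Z * X l - HH a p X Z * Y l) else 0.
Proof.
  intros a p X Y Z l H Hl. unfold Riem, sum3.
  rewrite !Riem_comp_E by (auto; lia).
  unfold RC, dlt, HH.
  destruct l as [|[|[|l]]]; try lia; simpl; unfold Rdiv; ring.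
Qed.

Lemma gdot_Riem : forall a p X Y Z W, 0 < DD a (p 0%nat) (p 1%nat) ->
  gdot a p (Riem a p X Y Z) W =
  4 * a * (HH a p Y Z * HH a p X W - HH a p X Z * HH a p Y W).
Proof.
  intros. rewrite gdot_E. unfold HH at 1. rewrite !Riem_E by (auto; lia).
  simpl. unfold HH. field. lra.
Qed.

Lemma locI : forall al be t, al < t < be -> locally t (fun s => al < s < be).
Proof.
  intros al be t H. apply (locally_interval _ t (Finite al) (Finite be)); simpl; try lra.
  intros y H1 H2. lra.
Qed.

Lemma Derive_ext_I : forall al be (f g : R -> R) t, (forall s, al < s < be -> f s = g s) ->
  al < t < be -> Derive f t = Derive g t.
Proof.
  intros al be f g t H Ht. apply Derive_ext_loc.
  generalize (locI _ _ _ Ht). apply filter_imp. auto.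
Qed.

Lemma ex_derive_ext_I : forall al be (f g : R -> R) t, (forall s, al < s < be -> f s = g s) ->
  al < t < be -> ex_derive f t -> ex_derive g t.
Proof.
  intros al be f g t H Ht. apply ex_derive_ext_loc.
  generalize (locI _ _ _ Ht). apply filter_imp. auto.
Qed.

Fixpoint Cn (al be : R) (n : nat) (f : R -> R) : Prop :=
  match n with
  | O => True
  | S m => (forall t, al < t < be -> ex_derive f t) /\ Cn al be m (Derive f)
  end.

Definition smooth al be f := forall n, Cn al be n f.

Section S.
Variables al be : R.

Lemma Cn_ext : forall n f g, (forall s, al < s < be -> f s = g s) -> Cn al be n f -> Cn al be n g.
Proof.
  induction n as [|n IH]; intros f g H Hf; simpl in *; auto.
  destruct Hf as [Hd Hf]. split.
  - intros t Ht. eapply ex_derive_ext_I; eauto.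
  - apply (IH (Derive f)); auto. intros s Hs. eapply Derive_ext_I; eauto.
Qed.

Lemma Cn_le : forall n f, Cn al be (S n) f -> Cn al be n f.
Proof.
  induction n as [|n IH]; intros f Hf; simpl in *; auto.
  destruct Hf as [Hd Hf]. split; auto.
Qed.

Lemma Cn_ex : forall n f t, Cn al be (S n) f -> al < t < be -> ex_derive f t.
Proof. intros n f t [H _] Ht. auto. Qed.

Lemma Cn_D : forall n f, Cn al be (S n) f -> Cn al be n (Derive f).
Proof. intros n f [_ H]. auto. Qed.

Lemma Cn_const : forall n c, Cn al be n (fun _ => c).
Proof.
  induction n as [|n IH]; intros c; simpl; auto. split.
  - intros. apply ex_derive_const.
  - apply (Cn_ext n (fun _ => 0)); auto. intros. rewrite Derive_const; auto.
Qed.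

Lemma Cn_plus : forall n f g, Cn al be n f -> Cn al be n g -> Cn al be n (fun t => f t + g t).
Proof.
  induction n as [|n IH]; intros f g Hf Hg; simpl in *; auto.
  destruct Hf as [Hdf Hf]; destruct Hg as [Hdg Hg]. split.
  - intros t Ht. auto_derive; auto.
  - apply (Cn_ext n (fun t => Derive f t + Derive g t)); auto.
    intros s Hs. rewrite Derive_plus; auto.
Qed.

Lemma Cn_mult : forall n f g, Cn al be n f -> Cn al be n g -> Cn al be n (fun t => f t * g t).
Proof.
  induction n as [|n IH]; intros f g Hf Hg; auto.
  assert (Hf' := Cn_le _ _ Hf). assert (Hg' := Cn_le _ _ Hg).
  simpl in Hf, Hg. destruct Hf as [Hdf Hf]; destruct Hg as [Hdg Hg]. split.
  - intros t Ht. auto_derive; auto.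
  - apply (Cn_ext n (fun t => Derive f t * g t + f t * Derive g t)).
    + intros s Hs. rewrite Derive_mult; auto.
    + apply Cn_plus; apply IH; auto.
Qed.

Lemma Cn_inv : forall n h, Cn al be n h -> (forall t, al < t < be -> h t <> 0) ->
  Cn al be n (fun t => / h t).
Proof.
  induction n as [|n IH]; intros h Hh Hnz; auto.
  assert (Hh' := Cn_le _ _ Hh). simpl in Hh. destruct Hh as [Hdh Hh]. split.
  - intros t Ht. apply ex_derive_inv; auto.
  - apply (Cn_ext n (fun t => (-1 * Derive h t) * (/ h t * / h t))).
    + intros s Hs. rewrite Derive_inv; auto. field. auto.
    + apply Cn_mult.
      * apply Cn_mult; auto. apply Cn_const.
      * apply Cn_mult; apply IH; auto.
Qed.

Lemma sm_ext : forall f g, (forall s, al < s < be -> f s = g s) -> smooth al be f -> smooth al be g.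
Proof. intros f g H Hf n. eapply Cn_ext; eauto. Qed.
Lemma sm_const : forall c, smooth al be (fun _ => c).
Proof. intros c n. apply Cn_const. Qed.
Lemma sm_plus : forall f g, smooth al be f -> smooth al be g -> smooth al be (fun t => f t + g t).
Proof. intros f g Hf Hg n. apply Cn_plus; auto. Qed.
Lemma sm_mult : forall f g, smooth al be f -> smooth al be g -> smooth al be (fun t => f t * g t).
Proof. intros f g Hf Hg n. apply Cn_mult; auto. Qed.
Lemma sm_inv : forall h, smooth al be h -> (forall t, al < t < be -> h t <> 0) -> smooth al be (fun t => / h t).
Proof. intros h Hh Hnz n. apply Cn_inv; auto. Qed.
Lemma sm_D : forall f, smooth al be f -> smooth al be (Derive f).
Proof. intros f Hf n. apply Cn_D. apply Hf. Qed.
Lemma sm_ex : forall f t, smooth al be f -> al < t < be -> ex_derive f t.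
Proof. intros f t Hf Ht. apply (Cn_ex 0 f t); auto. Qed.

Lemma sm_of_derive_n : forall f, (forall n t, al < t < be -> ex_derive_n f n t) -> smooth al be f.
Proof.
  intros f H n. revert f H. induction n as [|n IH]; intros f H; simpl; auto. split.
  - intros t Ht. apply (H 1%nat t Ht).
  - apply IH. intros m t Ht.
    assert (E : forall m, Derive_n (Derive f) m = Derive_n f (S m)).
    { induction m0 as [|m0 IHm]; simpl; auto. rewrite IHm. reflexivity. }
    destruct m as [|m]; simpl; auto.
    rewrite E. apply (H (S (S m)) t Ht).
Qed.
End S.

Ltac smt :=
  repeat match goal with
  | |- smooth _ _ (fun _ => _ + _) => apply sm_plus
  | |- smooth _ _ (fun _ => _ - _) => unfold Rminus; apply sm_plus
  | |- smooth _ _ (fun _ => _ * _) => apply sm_mult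
  | |- smooth _ _ (fun _ => _ / _) => unfold Rdiv; apply sm_mult
  | |- smooth _ _ (fun _ => - _) => apply (sm_ext _ _ _ _ (fun s => Ropp_mult_distr_l_reverse 1 _)); apply sm_mult
  | |- smooth _ _ (fun _ => / _) => apply sm_inv
  | |- smooth _ _ (fun _ => _ ^ 2) => simpl pow
  | |- smooth _ _ (fun _ => ?c) => apply sm_const
  | H : smooth ?x ?y ?f |- smooth ?x ?y ?f => exact H
  end.

Section C.
Variables (a al be : R) (gamma : R -> vec).
Hypothesis Hs : smooth_curve_in_M a al be gamma.

Lemma DD_pos : forall t, al < t < be -> 0 < DD a (gamma t 0%nat) (gamma t 1%nat).
Proof. intros t Ht. destruct Hs as [H _]. apply H. auto. Qed.

Lemma sm_gamma : forall k, (k < 3)%nat -> smooth al be (fun s => gamma s k).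
Proof. intros k Hk. apply sm_of_derive_n. intros n t Ht. destruct Hs as [_ H]. apply H; auto. Qed.

Lemma sm_DD : smooth al be (fun t => DD a (gamma t 0%nat) (gamma t 1%nat)).
Proof.
  unfold DD. assert (H0 := sm_gamma 0 ltac:(lia)). assert (H1 := sm_gamma 1 ltac:(lia)).
  smt.
Qed.

Lemma sm_Gamma : forall k i j, (k < 3)%nat -> (i < 3)%nat -> (j < 3)%nat ->
  smooth al be (fun t => Gamma a k i j (gamma t)).
Proof.
  intros k i j Hk Hi Hj.
  apply (sm_ext _ _ (fun t => GE a k i j (gamma t 0%nat) (gamma t 1%nat))).
  { intros s Hs'. rewrite Gamma_E; auto. assert (H:= DD_pos s Hs'). lra. }
  unfold GE. assert (H0 := sm_gamma 0 ltac:(lia)). assert (H1 := sm_gamma 1 ltac:(lia)).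
  assert (HD := sm_DD). smt.
  intros t Ht. assert (H:= DD_pos t Ht). lra.
Qed.

Lemma sm_nablaT : forall n k, (k < 3)%nat -> smooth al be (fun t => nablaT a gamma n t k).
Proof.
  induction n as [|n IH]; intros k Hk.
  - apply sm_D. apply sm_gamma; auto.
  - change (smooth al be (fun t => covD a gamma (nablaT a gamma n) t k)).
    unfold covD, sum3.
    assert (V0 := IH 0%nat ltac:(lia)). assert (V1 := IH 1%nat ltac:(lia)).
    assert (V2 := IH 2%nat ltac:(lia)).
    assert (T0 := sm_D _ _ _ (sm_gamma 0 ltac:(lia))).
    assert (T1 := sm_D _ _ _ (sm_gamma 1 ltac:(lia))).
    assert (T2 := sm_D _ _ _ (sm_gamma 2 ltac:(lia))).
    assert (VD := sm_D _ _ _ (IH k Hk)).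
    repeat match goal with |- smooth _ _ (fun _ => _ + _) => apply sm_plus end;
    try exact VD.
    all: try (apply sm_mult; [apply sm_mult; [apply sm_Gamma; lia | auto] | auto]).
Qed.
End C.

Lemma gen_deriv : forall a (v0 v1 v2 w0 w1 w2 gx gy : R -> R) t,
  ex_derive v0 t -> ex_derive v1 t -> ex_derive v2 t ->
  ex_derive w0 t -> ex_derive w1 t -> ex_derive w2 t ->
  ex_derive gx t -> ex_derive gy t -> DD a (gx t) (gy t) <> 0 ->
  is_derive (fun s => (v0 s * w0 s + v1 s * w1 s) / (DD a (gx s) (gy s)) ^ 2 + v2 s * w2 s) t
   ((Derive v0 t * w0 t + v0 t * Derive w0 t + Derive v1 t * w1 t + v1 t * Derive w1 t)
      / (DD a (gx t) (gy t)) ^ 2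
    - (v0 t * w0 t + v1 t * w1 t) * (4 * a * (gx t * Derive gx t + gy t * Derive gy t))
      / (DD a (gx t) (gy t)) ^ 3
    + (Derive v2 t * w2 t + v2 t * Derive w2 t)).
Proof.
  intros a v0 v1 v2 w0 w1 w2 gx gy t H0 H1 H2 H3 H4 H5 H6 H7 HD. unfold DD in *. auto_derive.
  all: try (repeat split; auto; rewrite Rmult_1_r; intro E; apply HD; nra).
  all: change (Derive (fun x => v0 x)) with (Derive v0); change (Derive (fun x => v1 x)) with (Derive v1); change (Derive (fun x => v2 x)) with (Derive v2); change (Derive (fun x => w0 x)) with (Derive w0); change (Derive (fun x => w1 x)) with (Derive w1); change (Derive (fun x => w2 x)) with (Derive w2); change (Derive (fun x => gx x)) with (Derive gx); change (Derive (fun x => gy x)) with (Derive gy).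
  all: field; intro E; apply HD; nra.
Qed.

Section M.
Variables (a alpha beta : R) (gamma : R -> vec).
Hypothesis Hs : smooth_curve_in_M a alpha beta gamma.

Lemma compat : forall (V W : R -> vec) t, alpha < t < beta ->
  (forall k, (k < 3)%nat -> ex_derive (fun s => V s k) t) ->
  (forall k, (k < 3)%nat -> ex_derive (fun s => W s k) t) ->
  is_derive (fun s => gdot a (gamma s) (V s) (W s)) t
    (gdot a (gamma t) (covD a gamma V t) (W t) + gdot a (gamma t) (V t) (covD a gamma W t)).
Proof.
  intros V W t Ht HV HW.
  apply (is_derive_ext (fun s => (V s 0%nat * W s 0%nat + V s 1%nat * W s 1%nat) /
      (DD a (gamma s 0%nat) (gamma s 1%nat)) ^ 2 + V s 2%nat * W s 2%nat)).
  { intros s. rewrite gdot_E. reflexivity. }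
  assert (HD := DD_pos a alpha beta gamma Hs t Ht).
  assert (Hg : forall k, (k < 3)%nat -> ex_derive (fun s => gamma s k) t).
  { intros k Hk. apply (sm_ex alpha beta); auto. apply (sm_gamma a alpha beta gamma Hs k Hk). }
  eapply is_derive_ext; [intros; reflexivity|].
  replace (gdot a (gamma t) (covD a gamma V t) (W t) + gdot a (gamma t) (V t) (covD a gamma W t))
    with ((Derive (fun s => V s 0%nat) t * W t 0%nat + V t 0%nat * Derive (fun s => W s 0%nat) t
           + Derive (fun s => V s 1%nat) t * W t 1%nat + V t 1%nat * Derive (fun s => W s 1%nat) t)
      / (DD a (gamma t 0%nat) (gamma t 1%nat)) ^ 2
    - (V t 0%nat * W t 0%nat + V t 1%nat * W t 1%nat) *
       (4 * a * (gamma t 0%nat * Derive (fun s => gamma s 0%nat) t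
                 + gamma t 1%nat * Derive (fun s => gamma s 1%nat) t))
      / (DD a (gamma t 0%nat) (gamma t 1%nat)) ^ 3
    + (Derive (fun s => V s 2%nat) t * W t 2%nat + V t 2%nat * Derive (fun s => W s 2%nat) t)).
  - apply (gen_deriv a (fun s => V s 0%nat) (fun s => V s 1%nat) (fun s => V s 2%nat)
             (fun s => W s 0%nat) (fun s => W s 1%nat) (fun s => W s 2%nat)
             (fun s => gamma s 0%nat) (fun s => gamma s 1%nat)); auto; try lra.
  - rewrite !gdot_E. unfold HH, covD, sum3, vel.
    rewrite !Gamma_E by (auto; lra).
    unfold GE, al, be. unfold DD in *. field. lra.
Qed.
End M.

Definition det3 (a b c d e f g h i : R) := a*(e*i - f*h) - b*(d*i - f*g) + c*(d*h - e*g).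
Definition det4 (m00 m01 m02 m03 m10 m11 m12 m13 m20 m21 m22 m23 m30 m31 m32 m33 : R) :=
  m00 * det3 m11 m12 m13 m21 m22 m23 m31 m32 m33
  - m01 * det3 m10 m12 m13 m20 m22 m23 m30 m32 m33
  + m02 * det3 m10 m11 m13 m20 m21 m23 m30 m31 m33
  - m03 * det3 m10 m11 m12 m20 m21 m22 m30 m31 m32.
Definition ip (w x0 x1 x2 y0 y1 y2 : R) := w * (x0*y0 + x1*y1) + x2*y2.
Lemma gram0 : forall w a0 a1 a2 b0 b1 b2 c0 c1 c2 d0 d1 d2,
  det4 (ip w a0 a1 a2 a0 a1 a2) (ip w a0 a1 a2 b0 b1 b2) (ip w a0 a1 a2 c0 c1 c2) (ip w a0 a1 a2 d0 d1 d2)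
       (ip w b0 b1 b2 a0 a1 a2) (ip w b0 b1 b2 b0 b1 b2) (ip w b0 b1 b2 c0 c1 c2) (ip w b0 b1 b2 d0 d1 d2)
       (ip w c0 c1 c2 a0 a1 a2) (ip w c0 c1 c2 b0 b1 b2) (ip w c0 c1 c2 c0 c1 c2) (ip w c0 c1 c2 d0 d1 d2)
       (ip w d0 d1 d2 a0 a1 a2) (ip w d0 d1 d2 b0 b1 b2) (ip w d0 d1 d2 c0 c1 c2) (ip w d0 d1 d2 d0 d1 d2) = 0.
Proof. intros. unfold det4, det3, ip. ring. Qed.

Lemma der_match : forall alpha beta (f g : R -> R) t l1 l2,
  is_derive f t l1 -> is_derive g t l2 -> (forall s, alpha < s < beta -> f s = g s) ->
  alpha < t < beta -> l1 = l2.
Proof.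
  intros alpha beta f g t l1 l2 H1 H2 He Ht.
  rewrite <- (is_derive_unique f t l1 H1), <- (is_derive_unique g t l2 H2).
  eapply Derive_ext_I; eauto.
Qed.

Lemma const_on_I : forall alpha beta (f : R -> R),
  (forall s, alpha < s < beta -> is_derive f s 0) ->
  forall s1 s2, alpha < s1 < beta -> alpha < s2 < beta -> f s1 = f s2.
Proof.
  intros alpha beta f Hd s1 s2 H1 H2.
  assert (Hmin : alpha < Rmin s1 s2) by (apply Rmin_glb_lt; lra).
  assert (Hmax : Rmax s1 s2 < beta) by (apply Rmax_lub_lt; lra).
  destruct (MVT_gen f s1 s2 (fun _ => 0)) as [c [_ Hc]].
  - intros x Hx. apply Hd. simpl in Hx. lra.
  - intros x Hx. simpl in Hx. apply derivable_continuous_pt.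
    exists 0. apply is_derive_Reals. apply Hd. lra.
  - lra.
Qed.

Lemma gdot_sym : forall a p X Y, gdot a p X Y = gdot a p Y X.
Proof. intros. rewrite !gdot_E. unfold HH. unfold Rdiv. ring. Qed.

Lemma HH_nonneg : forall a p X, 0 < DD a (p 0%nat) (p 1%nat) -> 0 <= HH a p X X.
Proof.
  intros a p X H. unfold HH. apply Rdiv_le_0_compat. nra. apply pow_lt. auto.
Qed.

Lemma gdot_nonneg : forall a p X, 0 < DD a (p 0%nat) (p 1%nat) -> 0 <= gdot a p X X.
Proof. intros. rewrite gdot_E. assert (H1 := HH_nonneg a p X H). nra. Qed.

Lemma gdot_zero2 : forall a p X, 0 < DD a (p 0%nat) (p 1%nat) -> gdot a p X X = 0 -> X 2%nat = 0.
Proof. intros a p X H H0. rewrite gdot_E in H0. assert (H1 := HH_nonneg a p X H). nra. Qed.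

Lemma gdot_pos : forall a p X k, 0 < DD a (p 0%nat) (p 1%nat) -> (k < 3)%nat -> X k <> 0 ->
  0 < gdot a p X X.
Proof.
  intros a p X k H Hk Hx. rewrite gdot_E. unfold HH.
  assert (H2 : 0 < DD a (p 0%nat) (p 1%nat) ^ 2) by (apply pow_lt; auto).
  destruct k as [|[|[|k]]]; try lia.
  - assert (0 < X 0%nat * X 0%nat) by nra.
    assert (0 < (X 0%nat * X 0%nat + X 1%nat * X 1%nat) / DD a (p 0%nat) (p 1%nat) ^ 2).
    { apply Rdiv_lt_0_compat; nra. } nra.
  - assert (0 < X 1%nat * X 1%nat) by nra.
    assert (0 < (X 0%nat * X 0%nat + X 1%nat * X 1%nat) / DD a (p 0%nat) (p 1%nat) ^ 2).
    { apply Rdiv_lt_0_compat; nra. } nra.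
  - assert (0 <= (X 0%nat * X 0%nat + X 1%nat * X 1%nat) / DD a (p 0%nat) (p 1%nat) ^ 2).
    { apply Rdiv_le_0_compat; nra. } nra.
Qed.

Lemma gdot_comb : forall a p X Y c,
  gdot a p (fun l => X l + c * Y l) (fun l => X l + c * Y l) =
  gdot a p X X + 2 * c * gdot a p X Y + c * c * gdot a p Y Y.
Proof. intros. rewrite !gdot_E. unfold HH. unfold Rdiv. ring. Qed.

Lemma gdot_ip : forall a p X Y, gdot a p X Y =
  ip (/ (DD a (p 0%nat) (p 1%nat)) ^ 2) (X 0%nat) (X 1%nat) (X 2%nat) (Y 0%nat) (Y 1%nat) (Y 2%nat).
Proof. intros. rewrite gdot_E. unfold HH, ip. unfold Rdiv. ring. Qed.

Lemma gram : forall a p A B C D,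
  gdot a p A B = 0 -> gdot a p A D = 0 -> gdot a p C B = 0 -> gdot a p C D = 0 ->
  (gdot a p A A * gdot a p C C - gdot a p A C ^ 2) *
  (gdot a p B B * gdot a p D D - gdot a p B D ^ 2) = 0.
Proof.
  intros a p A B C D H1 H2 H3 H4.
  assert (E := gram0 (/ (DD a (p 0%nat) (p 1%nat)) ^ 2) (A 0%nat) (A 1%nat) (A 2%nat)
     (B 0%nat) (B 1%nat) (B 2%nat) (C 0%nat) (C 1%nat) (C 2%nat) (D 0%nat) (D 1%nat) (D 2%nat)).
  rewrite <- !gdot_ip in E.
  rewrite (gdot_sym a p B A), (gdot_sym a p D A), (gdot_sym a p B C), (gdot_sym a p D C),
    (gdot_sym a p C A), (gdot_sym a p D B) in E.
  rewrite H1, H2, H3, H4 in E. unfold det4, det3 in E.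
  rewrite <- E. ring.
Qed.

Section Main.
Variables (a alpha beta : R) (gamma : R -> vec).
Hypothesis Ha : a < 0.
Hypothesis Hab : alpha < beta.
Hypothesis Hs : smooth_curve_in_M a alpha beta gamma.

Definition Gm (i j : nat) (t : R) : R :=
  gdot a (gamma t) (nablaT a gamma i t) (nablaT a gamma j t).
Definition Fm (n : nat) (t : R) : R := nablaT a gamma n t 2%nat.

Lemma G_der : forall i j t, alpha < t < beta ->
  is_derive (Gm i j) t (Gm (S i) j t + Gm i (S j) t).
Proof.
  intros i j t Ht. unfold Gm.
  apply (compat a alpha beta gamma Hs (nablaT a gamma i) (nablaT a gamma j) t Ht).
  - intros k Hk. apply (sm_ex alpha beta); auto. apply (sm_nablaT a alpha beta gamma Hs i k Hk).
  - intros k Hk. apply (sm_ex alpha beta); auto. apply (sm_nablaT a alpha beta gamma Hs j k Hk).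
Qed.

Lemma F_der : forall n t, alpha < t < beta -> is_derive (Fm n) t (Fm (S n) t).
Proof.
  intros n t Ht.
  assert (Hx : ex_derive (Fm n) t).
  { apply (sm_ex alpha beta); auto. apply (sm_nablaT a alpha beta gamma Hs n 2 ltac:(lia)). }
  destruct Hx as [l Hl].
  replace (Fm (S n) t) with l; auto.
  rewrite <- (is_derive_unique _ _ _ Hl).
  change (Fm (S n) t) with (covD a gamma (nablaT a gamma n) t 2%nat). unfold Fm.
  unfold covD, sum3.
  assert (HD := DD_pos a alpha beta gamma Hs t Ht).
  rewrite !Gamma_E by (auto; lra). unfold GE, al, be.
  match goal with |- ?A = ?B => change (@eq R A B) end. field. lra.
Qed.

Lemma sym_G : forall i j t, Gm i j t = Gm j i t.
Proof. intros. unfold Gm. apply gdot_sym. Qed.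

End Main.

Lemma der_scal_I : forall alpha beta (f g : R -> R) t l1 l2 k,
  is_derive f t l1 -> is_derive g t l2 -> (forall s, alpha < s < beta -> f s = k * g s) ->
  alpha < t < beta -> l1 = k * l2.
Proof.
  intros. eapply (der_match alpha beta f (fun s => k * g s)); eauto.
  apply is_derive_scal. auto.
Qed.

Lemma der_const_I : forall alpha beta (f : R -> R) t l c,
  is_derive f t l -> (forall s, alpha < s < beta -> f s = c) ->
  alpha < t < beta -> l = 0.
Proof.
  intros. eapply (der_match alpha beta f (fun s => c)); eauto.
  auto_derive; auto.
Qed.

Lemma gdot_zeroL : forall a p E W, (forall l, (l < 3)%nat -> E l = 0) -> gdot a p E W = 0.
Proof.
  intros a p E W H. rewrite gdot_E. unfold HH.
  rewrite (H 0%nat), (H 1%nat), (H 2%nat) by lia. unfold Rdiv. ring.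
Qed.

Lemma gdot_lin : forall a p X Y Z W,
  gdot a p (fun l => X l + Y l - Z l) W = gdot a p X W + gdot a p Y W - gdot a p Z W.
Proof. intros. rewrite !gdot_E. unfold HH. unfold Rdiv. ring. Qed.

Lemma HH_G : forall a p X Y, HH a p X Y = gdot a p X Y - X 2%nat * Y 2%nat.
Proof. intros. rewrite gdot_E. ring. Qed.

Theorem main_contra : forall (a alpha beta : R) (gamma : R -> vec),
    a < 0 -> alpha < beta ->
    smooth_curve_in_M a alpha beta gamma ->
    arc_length a alpha beta gamma ->
    triharmonic a alpha beta gamma ->
    constant_curvature a alpha beta gamma ->
    ~ geodesic a alpha beta gamma ->
    False.
Proof.
  intros a alpha beta gamma Ha Hab Hs Harc Htri [c0 Hc] Hng.
  set (G := Gm a gamma). set (F := Fm a gamma).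
  assert (Gd : forall i j t, alpha < t < beta -> is_derive (G i j) t (G (S i) j t + G i (S j) t))
    by (intros; eapply G_der; eauto).
  assert (Fd : forall n t, alpha < t < beta -> is_derive (F n) t (F (S n) t))
    by (intros; eapply F_der; eauto).
  assert (Gs : forall i j t, G i j t = G j i t) by (intros; apply sym_G).
  assert (HD : forall t, alpha < t < beta -> 0 < DD a (gamma t 0%nat) (gamma t 1%nat))
    by (intros; apply (DD_pos a alpha beta gamma Hs); auto).
  set (k2 := c0 * c0).
  assert (H11 : forall t, alpha < t < beta -> G 1%nat 1%nat t = k2).
  { intros t Ht. assert (E := Hc t Ht). unfold curvature in E. unfold k2. rewrite <- E.
    rewrite sqrt_sqrt. reflexivity. apply gdot_nonneg. auto. }
  assert (Hk2 : 0 < k2).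
  { destruct (Rlt_or_le 0 k2) as [h|h]; auto. exfalso. apply Hng.
    intros t Ht k Hk. destruct (Req_dec (nablaT a gamma 1 t k) 0) as [e|e]; auto.
    exfalso. assert (P := gdot_pos a (gamma t) (nablaT a gamma 1 t) k (HD t Ht) Hk e).
    assert (Q := H11 t Ht). unfold G, Gm in Q. lra. }
  assert (H00 : forall t, alpha < t < beta -> G 0%nat 0%nat t = 1) by (intros; apply Harc; auto).
  assert (H01 : forall t, alpha < t < beta -> G 0%nat 1%nat t = 0).
  { intros t Ht. assert (E := der_const_I _ _ _ _ _ _ (Gd 0%nat 0%nat t Ht) H00 Ht).
    rewrite Gs in E. lra. }
  assert (H02 : forall t, alpha < t < beta -> G 0%nat 2%nat t = - k2).
  { intros t Ht. assert (E := der_const_I _ _ _ _ _ _ (Gd 0%nat 1%nat t Ht) H01 Ht).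
    rewrite H11 in E; auto. lra. }
  assert (H12 : forall t, alpha < t < beta -> G 1%nat 2%nat t = 0).
  { intros t Ht. assert (E := der_const_I _ _ _ _ _ _ (Gd 1%nat 1%nat t Ht) H11 Ht).
    rewrite Gs in E. lra. }
  assert (H03 : forall t, alpha < t < beta -> G 0%nat 3%nat t = 0).
  { intros t Ht. assert (E := der_const_I _ _ _ _ _ _ (Gd 0%nat 2%nat t Ht) H02 Ht).
    rewrite H12 in E; auto. lra. }
  assert (H13 : forall t, alpha < t < beta -> G 1%nat 3%nat t = - G 2%nat 2%nat t).
  { intros t Ht. assert (E := der_const_I _ _ _ _ _ _ (Gd 1%nat 2%nat t Ht) H12 Ht). lra. }
  assert (H04 : forall t, alpha < t < beta -> G 0%nat 4%nat t = G 2%nat 2%nat t).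
  { intros t Ht. assert (E := der_const_I _ _ _ _ _ _ (Gd 0%nat 3%nat t Ht) H03 Ht).
    rewrite H13 in E; auto. lra. }
  assert (H14a : forall t, alpha < t < beta -> G 2%nat 3%nat t + G 1%nat 4%nat t = -1 * (G 3%nat 2%nat t + G 2%nat 3%nat t)).
  { intros t Ht. apply (der_scal_I alpha beta (G 1%nat 3%nat) (G 2%nat 2%nat) t); auto.
    intros s Hs'. rewrite H13; auto. ring. }
  assert (H05a : forall t, alpha < t < beta -> G 1%nat 4%nat t + G 0%nat 5%nat t = 1 * (G 3%nat 2%nat t + G 2%nat 3%nat t)).
  { intros t Ht. apply (der_scal_I alpha beta (G 0%nat 4%nat) (G 2%nat 2%nat) t); auto.
    intros s Hs'. rewrite H04; auto. ring. }
  assert (Tri : forall j t, alpha < t < beta ->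
     G 5%nat j t + gdot a (gamma t) (Riem a (gamma t) (nablaT a gamma 3 t) (vel gamma t) (vel gamma t)) (nablaT a gamma j t)
       - gdot a (gamma t) (Riem a (gamma t) (nablaT a gamma 2 t) (nablaT a gamma 1 t) (vel gamma t)) (nablaT a gamma j t) = 0).
  { intros j t Ht. unfold G, Gm. rewrite <- gdot_lin. apply gdot_zeroL.
    intros l Hl. apply Htri; auto. }
  assert (H05 : forall t, alpha < t < beta -> G 0%nat 5%nat t = 0).
  { intros t Ht. assert (E := Tri 0%nat t Ht). rewrite !gdot_Riem in E by auto.
    change (nablaT a gamma 0 t) with (vel gamma t) in E.
    rewrite Gs. rewrite <- E. ring. }
  assert (H23 : forall t, alpha < t < beta -> G 2%nat 3%nat t = 0).
  { intros t Ht. assert (E1 := H14a t Ht). assert (E2 := H05a t Ht). rewrite H05 in E2; auto.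
    rewrite (Gs 3%nat 2%nat) in E1, E2. lra. }
  set (tm := (alpha + beta) / 2).
  assert (Htm : alpha < tm < beta) by (unfold tm; lra).
  set (P0 := G 2%nat 2%nat tm).
  assert (HP : forall t, alpha < t < beta -> G 2%nat 2%nat t = P0).
  { intros t Ht. unfold P0. apply (const_on_I alpha beta); auto.
    intros s Hs'. replace 0 with (G 3%nat 2%nat s + G 2%nat 3%nat s). apply Gd; auto.
    rewrite Gs, H23; auto. ring. }
  assert (H14 : forall t, alpha < t < beta -> G 1%nat 4%nat t = 0).
  { intros t Ht. assert (E1 := H14a t Ht). rewrite (Gs 3%nat 2%nat), H23 in E1; auto. lra. }
  assert (H15 : forall t, alpha < t < beta -> G 1%nat 5%nat t = G 3%nat 3%nat t).
  { intros t Ht. assert (E1 := der_const_I _ _ _ _ _ _ (Gd 2%nat 3%nat t Ht) H23 Ht).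
    assert (E2 := der_const_I _ _ _ _ _ _ (Gd 1%nat 4%nat t Ht) H14 Ht).
    lra. }
  (* Cauchy-Schwarz *)
  assert (HPk : k2 * k2 <= P0).
  { assert (N := gdot_nonneg a (gamma tm) (fun l => nablaT a gamma 2 tm l + k2 * nablaT a gamma 0 tm l) (HD tm Htm)).
    rewrite gdot_comb in N.
    assert (e1 : gdot a (gamma tm) (nablaT a gamma 2 tm) (nablaT a gamma 2 tm) = P0) by exact (HP tm Htm).
    assert (e2 : gdot a (gamma tm) (nablaT a gamma 2 tm) (nablaT a gamma 0 tm) = - k2)
      by (rewrite gdot_sym; exact (H02 tm Htm)).
    assert (e3 : gdot a (gamma tm) (nablaT a gamma 0 tm) (nablaT a gamma 0 tm) = 1) by exact (H00 tm Htm).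
    rewrite e1, e2, e3 in N. nra. }
  assert (HA : exists A, 0 < A /\ forall t, alpha < t < beta -> F 3%nat t = - A * F 1%nat t).
  { destruct (Req_dec P0 (k2 * k2)) as [e|e].
    - exists k2. split; auto.
      assert (Z : forall t, alpha < t < beta -> F 2%nat t = - k2 * F 0%nat t).
      { intros t Ht.
        assert (E := gdot_comb a (gamma t) (nablaT a gamma 2 t) (nablaT a gamma 0 t) k2).
        assert (e1 : gdot a (gamma t) (nablaT a gamma 2 t) (nablaT a gamma 2 t) = P0) by exact (HP t Ht).
        assert (e2 : gdot a (gamma t) (nablaT a gamma 2 t) (nablaT a gamma 0 t) = - k2)
          by (rewrite gdot_sym; exact (H02 t Ht)).
        assert (e3 : gdot a (gamma t) (nablaT a gamma 0 t) (nablaT a gamma 0 t) = 1) by exact (H00 t Ht).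
        rewrite e1, e2, e3 in E.
        assert (Z := gdot_zero2 a (gamma t) (fun l => nablaT a gamma 2 t l + k2 * nablaT a gamma 0 t l) (HD t Ht)). cbv beta in Z.
        assert (Z' := Z ltac:(rewrite E, e; ring)).
        change (nablaT a gamma 2 t 2%nat + k2 * nablaT a gamma 0 t 2%nat = 0) in Z'.
        change (nablaT a gamma 2 t 2%nat = - k2 * nablaT a gamma 0 t 2%nat). lra. }
      intros t Ht. apply (der_scal_I alpha beta (F 2%nat) (F 0%nat) t); auto.
    - assert (Hg : forall t, alpha < t < beta -> k2 * G 3%nat 3%nat t = P0 * P0).
      { intros t Ht.
        assert (E := gram a (gamma t) (nablaT a gamma 0 t) (nablaT a gamma 1 t)
                      (nablaT a gamma 2 t) (nablaT a gamma 3 t)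
                      (H01 t Ht) (H03 t Ht) ltac:(rewrite gdot_sym; exact (H12 t Ht)) (H23 t Ht)).
        assert (e1 : gdot a (gamma t) (nablaT a gamma 2 t) (nablaT a gamma 2 t) = P0) by exact (HP t Ht).
        assert (e2 : gdot a (gamma t) (nablaT a gamma 0 t) (nablaT a gamma 2 t) = - k2) by exact (H02 t Ht).
        assert (e3 : gdot a (gamma t) (nablaT a gamma 0 t) (nablaT a gamma 0 t) = 1) by exact (H00 t Ht).
        assert (e4 : gdot a (gamma t) (nablaT a gamma 1 t) (nablaT a gamma 1 t) = k2) by exact (H11 t Ht).
        assert (e5 : gdot a (gamma t) (nablaT a gamma 1 t) (nablaT a gamma 3 t) = - P0)
          by (rewrite <- (HP t Ht); exact (H13 t Ht)).
        rewrite e1, e2, e3, e4, e5 in E.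
        change (gdot a (gamma t) (nablaT a gamma 3 t) (nablaT a gamma 3 t)) with (G 3%nat 3%nat t) in E.
        assert (P0 - k2 * k2 <> 0) by lra.
        assert (E' : (P0 - k2 * k2) * (k2 * G 3%nat 3%nat t - P0 * P0) = 0) by (rewrite <- E; ring).
        apply Rmult_integral in E'. destruct E'; lra. }
      exists (P0 / k2). split. { apply Rdiv_lt_0_compat; nra. }
      intros t Ht.
      assert (E := gdot_comb a (gamma t) (nablaT a gamma 3 t) (nablaT a gamma 1 t) (P0 / k2)).
      assert (e4 : gdot a (gamma t) (nablaT a gamma 1 t) (nablaT a gamma 1 t) = k2) by exact (H11 t Ht).
      assert (e5 : gdot a (gamma t) (nablaT a gamma 3 t) (nablaT a gamma 1 t) = - P0)
          by (rewrite gdot_sym, <- (HP t Ht); exact (H13 t Ht)).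
      rewrite e4, e5 in E.
      change (gdot a (gamma t) (nablaT a gamma 3 t) (nablaT a gamma 3 t)) with (G 3%nat 3%nat t) in E.
      assert (Z := gdot_zero2 a (gamma t) (fun l => nablaT a gamma 3 t l + P0 / k2 * nablaT a gamma 1 t l) (HD t Ht)). cbv beta in Z.
      assert (Z' : nablaT a gamma 3 t 2%nat + P0 / k2 * nablaT a gamma 1 t 2%nat = 0).
      { apply Z. rewrite E. assert (Hg' := Hg t Ht).
        replace (G 3%nat 3%nat t) with (P0 * P0 / k2). field. lra.
        rewrite <- Hg'. field. lra. }
      change (nablaT a gamma 3 t 2%nat = - (P0 / k2) * nablaT a gamma 1 t 2%nat). lra. }
  destruct HA as [A [HA HF3]].
  assert (HF5 : forall t, alpha < t < beta -> F 5%nat t = 0).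
  { intros t Ht. assert (E := Htri t Ht 2%nat ltac:(lia)).
    rewrite !Riem_E in E by (auto; lia). simpl in E.
    change (nablaT a gamma 5 t 2%nat = 0). lra. }
  assert (HF4 : forall t, alpha < t < beta -> F 4%nat t = - A * F 2%nat t).
  { intros t Ht. apply (der_scal_I alpha beta (F 3%nat) (F 1%nat) t); auto. }
  assert (HF1 : forall t, alpha < t < beta -> F 1%nat t = 0).
  { intros t Ht. assert (E : F 5%nat t = - A * F 3%nat t).
    { apply (der_scal_I alpha beta (F 4%nat) (F 2%nat) t); auto. }
    rewrite HF5, HF3 in E; auto. assert (E2 : (A * A) * F 1%nat t = 0) by lra. apply Rmult_integral in E2. destruct E2 as [E2|E2]; auto. nra. }
  assert (HF2 : forall t, alpha < t < beta -> F 2%nat t = 0).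
  { intros t Ht. apply (der_const_I alpha beta (F 1%nat) t _ 0); auto. }
  assert (E := Tri 1%nat tm Htm). rewrite !gdot_Riem in E by auto.
  rewrite !HH_G in E.
  change (vel gamma tm) with (nablaT a gamma 0 tm) in E.
  assert (f3 : nablaT a gamma 3 tm 2%nat = 0) by (change (F 3%nat tm = 0); rewrite HF3, HF1 by auto; ring).
  assert (f2 : nablaT a gamma 2 tm 2%nat = 0) by exact (HF2 tm Htm).
  assert (f1 : nablaT a gamma 1 tm 2%nat = 0) by exact (HF1 tm Htm).
  rewrite f1, f2, f3 in E.
  assert (e1 : gdot a (gamma tm) (nablaT a gamma 0 tm) (nablaT a gamma 1 tm) = 0) by exact (H01 tm Htm).
  assert (e1' : gdot a (gamma tm) (nablaT a gamma 1 tm) (nablaT a gamma 0 tm) = 0)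
    by (rewrite gdot_sym; exact (H01 tm Htm)).
  assert (e2 : gdot a (gamma tm) (nablaT a gamma 2 tm) (nablaT a gamma 0 tm) = - k2)
    by (rewrite gdot_sym; exact (H02 tm Htm)).
  assert (e3 : gdot a (gamma tm) (nablaT a gamma 0 tm) (nablaT a gamma 0 tm) = 1) by exact (H00 tm Htm).
  assert (e4 : gdot a (gamma tm) (nablaT a gamma 1 tm) (nablaT a gamma 1 tm) = k2) by exact (H11 tm Htm).
  assert (e5 : gdot a (gamma tm) (nablaT a gamma 3 tm) (nablaT a gamma 1 tm) = - P0)
    by (rewrite gdot_sym, <- (HP tm Htm); exact (H13 tm Htm)).
  assert (e6 : gdot a (gamma tm) (nablaT a gamma 3 tm) (nablaT a gamma 0 tm) = 0)
    by (rewrite gdot_sym; exact (H03 tm Htm)).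
  assert (e7 : gdot a (gamma tm) (nablaT a gamma 2 tm) (nablaT a gamma 1 tm) = 0)
    by (rewrite gdot_sym; exact (H12 tm Htm)).
  assert (e8 : G 5%nat 1%nat tm = G 3%nat 3%nat tm) by (rewrite Gs; exact (H15 tm Htm)).
  rewrite e1, e1', e2, e3, e4, e5, e6, e7, e8 in E.
  assert (N0 := HH_nonneg a (gamma tm) (nablaT a gamma 0 tm) (HD tm Htm)).
  rewrite HH_G, e3 in N0.
  assert (N3 := gdot_nonneg a (gamma tm) (nablaT a gamma 3 tm) (HD tm Htm)).
  change (gdot a (gamma tm) (nablaT a gamma 3 tm) (nablaT a gamma 3 tm)) with (G 3%nat 3%nat tm) in N3.
  assert (P0pos : 0 <= P0) by nra.
  set (h := 1 - nablaT a gamma 0 tm 2%nat * nablaT a gamma 0 tm 2%nat) in *.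
  assert (0 <= - a * h * P0) by (apply Rmult_le_pos; [nra|auto]).
  assert (0 < - a * (k2 * k2)) by (apply Rmult_lt_0_compat; nra).
  nra.
Qed.


Theorem corollary4p10 :
  forall (a alpha beta : R) (gamma : R -> vec),
    a < 0 -> alpha < beta ->
    smooth_curve_in_M a alpha beta gamma ->
    arc_length a alpha beta gamma ->
    triharmonic a alpha beta gamma ->
    constant_curvature a alpha beta gamma ->
    ~ geodesic a alpha beta gamma ->
    False.
Proof. exact main_contra. Qed.
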